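(* Let $n\ge 2$, $\rho>0$, and let $F$ be a continuous distribution supported on the non-negative real numbers with a monotone decreasing density $f$ (and positive mean). Then the best-case zero-outage capacity $\overline{R^{0}}(\rho)=\log_2(1+\rho\,\phi(0))$ satisfies $\overline{R^{0}}(\rho)>0$.
   Context: Let $G=F^{-1}$ be the quantile function of $F$. For $a\in[0,1]$ define $H_a(x)=(n-1)G(a+(n-1)x)+G(1-x)$ and $c_n(a)=\min\{c\in[0,\tfrac{1-a}{n}]: \int_c^{(1-a)/n}H_a(t)\,dt\ge(\tfrac{1-a}{n}-c)H_a(c)\}$, and $\phi(a)=H_a(c_n(a))$ if $c_n(a)>0$, $\phi(a)=n\,\mathbb{E}[X\mid X>G(a)]$ with $X\sim F$ if $c_n(a)=0$. The quantity $\log_2(1+\rho\phi(\varepsilon))$ is the largest $\varepsilon$-outage capacity $\sup\{R\ge0:\Pr(\sum_{i=1}^n|h_i|^2<(2^R-1)/\rho)<\varepsilon\}$ over all joint distributions of $(|h_1|^2,\dots,|h_n|^2)$ with each $|h_i|^2\sim F$; the zero-outage case is $\varepsilon=0$. *)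

(* Defs.v *)
From HB Require Import structures.
From mathcomp Require Import all_boot all_order all_algebra.
From mathcomp Require Import all_classical all_reals all_analysis.
Set Implicit Arguments. Unset Strict Implicit. Unset Printing Implicit Defensive.
Import Order.TTheory GRing.Theory Num.Theory.
Import numFieldNormedType.Exports.
Local Open Scope classical_set_scope.
Local Open Scope ring_scope.

(* Quantile function G = F^{-1}: G p = inf {x >= 0 | p <= F x}, valued in \bar R
   (G 1 = +oo when the support is unbounded; G 0 = 0, the left end of the
   support [0,oo)). *)
Definition quantile (R : realType) (F : R -> R) (p : R) : \bar R :=
  ereal_inf [set x%:E | x in [set x : R | 0 <= x /\ p <= F x]].

Definition Hfun (R : realType) (F : R -> R) (n : nat) (a x : R) : \bar R :=
  ((n.-1)%:R%:E * quantile F (a + (n.-1)%:R * x) + quantile F (1 - x))%E.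

Definition cn_cond (R : realType) (F : R -> R) (n : nat) (a c : R) : Prop :=
  ((((1 - a) / n%:R - c)%R)%:E * Hfun F n a c <=
    \int[@lebesgue_measure R]_(t in `[c, ((1 - a) / n%:R)%R]) Hfun F n a t)%E.

(* c_n(a) = min { c in [0,(1-a)/n] | condition } (taken as the infimum) *)
Definition c_n (R : realType) (F : R -> R) (n : nat) (a : R) : R :=
  inf [set c : R | 0 <= c <= (1 - a) / n%:R /\ cn_cond F n a c].

Definition cond_mean (R : realType) (F f : R -> R) (t : R) : \bar R :=
  ((\int[@lebesgue_measure R]_(x in `]t, +oo[) (x * f x)%:E) *
     (((1 - F t)^-1)%R)%:E)%E.

Definition phi (R : realType) (F f : R -> R) (n : nat) (a : R) : \bar R :=
  if 0 < c_n F n a then Hfun F n a (c_n F n a)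
  else (n%:R%:E * cond_mean F f (fine (quantile F a)))%E.

Definition capacity (R : realType) (rho : R) (ph : \bar R) : \bar R :=
  match ph with
  | r%:E => ((ln (1 + rho * r) / ln 2)%R)%:E
  | +oo%E => +oo%E
  | -oo%E => -oo%E
  end.

(* Main.v *)
Require Import Defs.
From HB Require Import structures.
From mathcomp Require Import all_boot all_order all_algebra.
From mathcomp Require Import all_classical all_reals all_analysis.
Import Order.TTheory GRing.Theory Num.Theory.
Import numFieldNormedType.Exports.
Local Open Scope classical_set_scope.
Local Open Scope ring_scope.

Section S.
Context (R : realType).

Lemma F_itv (F f : R -> R) :
  (forall x, x < 0 -> f x = 0) ->
  (forall x, ((F x)%:E = \int[@lebesgue_measure R]_(t in `]-oo, x]) (f t)%:E)%E) ->
  forall x, ((F x)%:E = \int[@lebesgue_measure R]_(t in `[0%R, x]) (f t)%:E)%E.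
Proof.
move=> f0 hF x; rewrite hF integral_mkcond [RHS]integral_mkcond.
apply: eq_integral => t _; rewrite !patchE.
case: (ltP t 0) => [t0|t0].
  rewrite f0 //; by case: ifP; case: ifP.
by rewrite !mem_setE !in_itv /= t0.
Qed.

Lemma F_ge0 (F f : R -> R) :
  (forall x, 0 <= f x) ->
  (forall x, ((F x)%:E = \int[@lebesgue_measure R]_(t in `]-oo, x]) (f t)%:E)%E) ->
  forall x, 0 <= F x.
Proof.
move=> fge hF x; rewrite -lee_fin hF; apply: integral_ge0 => t _.
by rewrite lee_fin.
Qed.

Lemma F_0 (F f : R -> R) :
  (forall x, x < 0 -> f x = 0) ->
  (forall x, ((F x)%:E = \int[@lebesgue_measure R]_(t in `]-oo, x]) (f t)%:E)%E) ->
  F 0 = 0.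
Proof.
move=> f0 hF; have := @F_itv F f f0 hF 0.
by rewrite set_itv1 integral_set1 => -[].
Qed.


Lemma F_mono (F f : R -> R) :
  measurable_fun setT f ->
  (forall x, 0 <= f x) ->
  (forall x, x < 0 -> f x = 0) ->
  (forall x, ((F x)%:E = \int[@lebesgue_measure R]_(t in `]-oo, x]) (f t)%:E)%E) ->
  forall x y, x <= y -> F x <= F y.
Proof.
move=> mf fge f0 hF x y xy; rewrite -lee_fin !(@F_itv F f f0 hF).
apply: ge0_subset_integral => //.
- apply/measurable_realfun.measurable_EFinP; exact: measurable_funTS.
- by move=> t _; rewrite lee_fin.
- by apply: subset_itvl; rewrite bnd_simp.
Qed.

Lemma f_int (f : R -> R) :
  measurable_fun setT f ->
  (forall x, 0 <= f x) ->
  (\int[@lebesgue_measure R]_(t in setT) (f t)%:E = 1)%E ->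
  (@lebesgue_measure R).-integrable setT (EFin \o f).
Proof.
move=> mf fge h1; apply/integrableP; split; first exact/measurable_realfun.measurable_EFinP.
under eq_integral do rewrite /= ger0_norm//.
by rewrite h1 ltry.
Qed.

Lemma F_small (F f : R -> R) :
  measurable_fun setT f ->
  (forall x, 0 <= f x) ->
  (forall x, x < 0 -> f x = 0) ->
  (forall x, ((F x)%:E = \int[@lebesgue_measure R]_(t in `]-oo, x]) (f t)%:E)%E) ->
  (\int[@lebesgue_measure R]_(t in setT) (f t)%:E = 1)%E ->
  forall p, 0 < p -> exists d, 0 < d /\ F d < p.
Proof.
move=> mf fge f0 hF h1 p p0.
have [d [d0 H]] := integral_normr_continuous (@f_int f mf fge h1) p0.
have d20 : 0 < d / 2 by rewrite divr_gt0.
exists (d / 2); split => //.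
have hm : (@lebesgue_measure R `[0%R, (d / 2)%R]%classic < d%:E)%E.
  rewrite lebesgue_measure_itv /= lte_fin d20 lte_fin subr0.
  by rewrite ltr_pdivrMr// ltr_pMr// ltr1n.
have := H `[0, d / 2]%classic (measurable_itv _) hm.
rewrite /Rintegral.
under eq_integral do rewrite ger0_norm//.
by rewrite -(@F_itv F f f0 hF).
Qed.


Lemma G_ge0 (F : R -> R) p : (0 <= quantile F p)%E.
Proof. by apply/ereal_infP => y [x [x0 _] <-]; rewrite lee_fin. Qed.

Lemma G_pos (F f : R -> R) :
  measurable_fun setT f ->
  (forall x, 0 <= f x) ->
  (forall x, x < 0 -> f x = 0) ->
  (forall x, ((F x)%:E = \int[@lebesgue_measure R]_(t in `]-oo, x]) (f t)%:E)%E) ->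
  (\int[@lebesgue_measure R]_(t in setT) (f t)%:E = 1)%E ->
  forall p, 0 < p -> (0 < quantile F p)%E.
Proof.
move=> mf fge f0 hF h1 p p0.
have [d [d0 Fd]] := @F_small F f mf fge f0 hF h1 p p0.
apply: (@lt_le_trans _ _ d%:E); first by rewrite lte_fin.
apply/ereal_infP => _ [x [x0 px] <-]; rewrite lee_fin leNgt; apply/negP => xd.
have := @F_mono F f mf fge f0 hF x d (ltW xd).
move=> h; have := le_lt_trans (le_trans px h) Fd; by rewrite ltxx.
Qed.

Lemma G_0 (F f : R -> R) :
  (forall x, 0 <= f x) ->
  (forall x, ((F x)%:E = \int[@lebesgue_measure R]_(t in `]-oo, x]) (f t)%:E)%E) ->
  quantile F 0 = 0%E.
Proof.
move=> fge hF; apply/le_anti; rewrite G_ge0 andbT.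
apply: ereal_inf_lbound; exists 0 => //; split => //.
exact: (@F_ge0 F f fge hF).
Qed.

Lemma cap_pos (rho : R) (ph : \bar R) : 0 < rho -> (0 < ph)%E -> (0 < capacity rho ph)%E.
Proof.
move=> r0; case: ph => [r| |] //=; rewrite ?lte_fin => r0'.
  apply: divr_gt0; apply: ln_gt0; last by rewrite ltr1n.
  by rewrite ltrDl mulr_gt0.
Qed.

End S.

Theorem proposition1 (R : realType) (n : nat) (rho : R) (F f : R -> R) :
  (2 <= n)%N -> 0 < rho ->
  measurable_fun setT f ->
  (forall x, 0 <= f x) ->
  (forall x, x < 0 -> f x = 0) ->
  (forall x y, 0 < x -> x <= y -> f y <= f x) ->
  (forall x, ((F x)%:E = \int[@lebesgue_measure R]_(t in `]-oo, x]) (f t)%:E)%E) ->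
  (\int[@lebesgue_measure R]_(t in setT) (f t)%:E = 1)%E ->
  (0 < \int[@lebesgue_measure R]_(t in setT) (t * f t)%:E)%E ->
  (0 < capacity rho (phi F f n 0))%E.
Proof.
move=> n2 rho0 mf fge f0 fdec hF h1 hmean.
apply: cap_pos => //.
rewrite /phi; case: ifPn => [c0|c0].
- set c := c_n F n 0 in c0 *.
  have cle : c <= (1 - 0) / n%:R.
    rewrite /c /c_n.
    set S := [set c0 : R | _].
    case: (pselect (exists s, S s)) => [[s Ss]|nS].
      have hlb : has_lbound S.
        by exists 0 => y [/andP[y0 _] _].
      apply: le_trans (ge_inf hlb Ss) _.
      by case: Ss => /andP[].
    exfalso; move: c0; rewrite /c /c_n -/S.
    have -> : S = set0.
      by apply/seteqP; split => // y Sy; apply: nS; exists y.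
    by rewrite inf0 ltxx.
  have c1 : 0 < 1 - c.
    rewrite subr_gt0; apply: le_lt_trans cle _.
    by rewrite subr0 ltr_pdivrMr ?ltr0n ?mul1r ?ltr1n//; apply: leq_trans n2.
  rewrite /Hfun; apply: lte_paddl.
    by apply: mule_ge0; [rewrite lee_fin ler0n | exact: G_ge0].
  exact: (@G_pos R F f mf fge f0 hF h1).
- rewrite (@G_0 R F f fge hF) /= /cond_mean (@F_0 R F f f0 hF) subr0 invr1 mule1.
  apply: mule_gt0; first by rewrite lte_fin ltr0n; apply: leq_trans n2.
  suff -> : (\int[@lebesgue_measure R]_(x in `]0%R, +oo[) (x * f x)%:E =
     \int[@lebesgue_measure R]_(t in setT) (t * f t)%:E)%E by [].
  rewrite integral_mkcond; apply: eq_integral => t _; rewrite patchE.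
  case: ifPn => // /negP; rewrite mem_setE in_itv /= andbT => /negP; rewrite -leNgt => t0.
  case: (ltP t 0) => [tn|tp]; first by rewrite f0 ?mulr0.
  have -> : t = 0 by apply/le_anti; rewrite t0 tp.
  by rewrite mul0r.
Qed.
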